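(* Let $X$ be a $T_1$ topological space. (i) For every $\alpha\in X$, the maximal ideal $M_\alpha=\{f\in C_c(X)_F: f(\alpha)=0\}$ is generated by the idempotent $1-\chi_{\{\alpha\}}$. (ii) Every prime ideal of $C_c(X)_F$ which is not maximal is an essential ideal.
   Context: $C_c(X)_F$ denotes the set of all functions $f:X\to\mathbb{R}$ whose range is countable and whose set of points of discontinuity is finite; it is a commutative ring with unity under pointwise operations. $\chi_{\{\alpha\}}$ is the function equal to $1$ at $\alpha$ and $0$ elsewhere. An ideal is essential if it meets every nonzero ideal nontrivially. *)

(* Defs.v *)
From HB Require Import structures.
From mathcomp Require Import all_boot all_order all_algebra.
From mathcomp Require Import all_classical all_reals all_analysis.
Set Implicit Arguments. Unset Strict Implicit. Unset Printing Implicit Defensive.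
Import Order.TTheory GRing.Theory Num.Theory.
Import numFieldNormedType.Exports.
Local Open Scope classical_set_scope.
Local Open Scope ring_scope.

Section CcF.
Variables (X : topologicalType) (R : realType).

Definition CcF : set (X -> R) :=
  [set f | countable (range f) /\ finite_set [set x | ~ {for x, continuous f}]].

Definition fzero : X -> R := fun _ => 0.
Definition fone : X -> R := fun _ => 1.
Definition fadd (f g : X -> R) : X -> R := fun x => f x + g x.
Definition fopp (f : X -> R) : X -> R := fun x => - f x.
Definition fmul (f g : X -> R) : X -> R := fun x => f x * g x.

Definition chi1 (a : X) : X -> R := fun x => if pselect (x = a) then 1 else 0.

Definition is_ideal (I : set (X -> R)) : Prop :=
  [/\ I `<=` CcF, I fzero,
      (forall f g, I f -> I g -> I (fadd f g)) &
      (forall f g, CcF f -> I g -> I (fmul f g))].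

Definition is_proper_ideal (I : set (X -> R)) : Prop :=
  is_ideal I /\ I != CcF.

Definition is_maximal_ideal (I : set (X -> R)) : Prop :=
  is_proper_ideal I /\
  forall J, is_ideal J -> I `<=` J -> J = I \/ J = CcF.

Definition is_prime_ideal (I : set (X -> R)) : Prop :=
  is_proper_ideal I /\
  forall f g, CcF f -> CcF g -> I (fmul f g) -> I f \/ I g.

(* the ideal generated by e (ring with unity: the multiples of e) *)
Definition principal_ideal (e : X -> R) : set (X -> R) :=
  [set h | exists2 g, CcF g & h = fmul g e].

Definition is_essential_ideal (I : set (X -> R)) : Prop :=
  is_ideal I /\
  forall J, is_ideal J -> J != [set fzero] ->
    exists f, [/\ I f, J f & f <> fzero].

Definition M_ (a : X) : set (X -> R) := [set f | CcF f /\ f a = 0].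

End CcF.

(* Main.v *)
Require Import Defs.
From HB Require Import structures.
From mathcomp Require Import all_boot all_order all_algebra.
From mathcomp Require Import all_classical all_reals all_analysis.
Import Order.TTheory GRing.Theory Num.Theory.
Import numFieldNormedType.Exports.
Local Open Scope classical_set_scope.
Local Open Scope ring_scope.

Section S.
Variables (X : topologicalType) (R : realType).
Local Notation CcF := (@CcF X R).
Local Notation fadd := (@fadd X R).
Local Notation fmul := (@fmul X R).
Local Notation fopp := (@fopp X R).

Lemma range_op2 (f g : X -> R) (op : R -> R -> R) :
  countable (range f) -> countable (range g) ->
  countable (range (fun x => op (f x) (g x))).
Proof.
move=> cf cg; apply: (sub_countable _ (countableX cf cg)).
apply: card_le_trans (card_image_le (fun p => op p.1 p.2) _).
apply: subset_card_le => _ [x _ <-].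
by exists (f x, g x) => //; split; exists x.
Qed.

Lemma disc_op2 (f g h : X -> R) :
  (forall x : X, ({for x, continuous f}) -> ({for x, continuous g}) -> {for x, continuous h}) ->
  finite_set [set x | ~ {for x, continuous f}] ->
  finite_set [set x | ~ {for x, continuous g}] ->
  finite_set [set x | ~ {for x, continuous h}].
Proof.
move=> H ff fg; apply: (sub_finite_set (B := [set x | ~ {for x, continuous f}] `|` [set x | ~ {for x, continuous g}])).
  move=> x /= nh; apply: contrapT => /not_orP [/contrapT a /contrapT b].
  by apply: nh; apply: H.
by rewrite finite_setU.
Qed.

Lemma CcF_add f g : CcF f -> CcF g -> CcF (fadd f g).
Proof.
move=> [cf df] [cg dg]; split; first exact: range_op2.
apply: disc_op2 df dg => x a b; exact: cvgD.
Qed.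

Lemma CcF_mul f g : CcF f -> CcF g -> CcF (fmul f g).
Proof.
move=> [cf df] [cg dg]; split; first exact: range_op2.
apply: disc_op2 df dg => x a b; exact: cvgM.
Qed.

Lemma CcF_cst (c : R) : CcF (fun _ : X => c).
Proof.
split.
  apply: finite_set_countable; apply: (sub_finite_set (B := [set c])) => //.
  by move=> _ [x _ <-].
apply: (sub_finite_set (B := set0)) => // x /= H; apply: H; exact: cvg_cst.
Qed.

Lemma CcF_opp f : CcF f -> CcF (fopp f).
Proof.
move=> cf; have -> : fopp f = fmul (fun _ => -1) f.
  by apply/funext => x; rewrite /fopp /fmul mulN1r.
exact/CcF_mul/cf/CcF_cst.
Qed.

Lemma CcF_chi (hT1 : accessible_space X) a : CcF (chi1 R a).
Proof.
split.
  apply: finite_set_countable; apply: (sub_finite_set (B := [set 0; 1])).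
    move=> _ [x _ <-]; rewrite /chi1; case: pselect => h; [by right|by left].
  by rewrite finite_setU; split; apply: finite_set1.
apply: (sub_finite_set (B := [set a])); last exact: finite_set1.
move=> x /= H; apply: contrapT => xa; apply: H.
have nx : nbhs x (~` [set a]).
  apply: open_nbhs_nbhs; split; last by [].
  exact: closed_openC (@accessible_closed_set1 _ hT1 a).
apply: cvg_trans (near_eq_cvg _) (cvg_cst (chi1 R a x)).
near=> y.
have : (~` [set a]) y by near: y.
by rewrite /chi1; case: pselect => //; case: pselect.
Unshelve. all: by end_near.
Qed.


Local Notation M_ := (@M_ X R).
Local Notation chi1 := (@chi1 X R).

Lemma partI (hT1 : accessible_space X) (a : X) :
  let e := fadd (@fone X R) (fopp (chi1 a)) in
  [/\ is_maximal_ideal (M_ a), CcF e, fmul e e = e & M_ a = principal_ideal e].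
Proof.
move=> e.
have Ce : CcF e by apply: CcF_add; [exact: CcF_cst | exact/CcF_opp/CcF_chi].
have ee : fmul e e = e.
  apply/funext => x; rewrite /e /fmul /fadd /fone /fopp /chi1.
  by case: pselect => h; rewrite ?subrr ?mulr0 ?subr0 ?mulr1.
have Me : M_ a = principal_ideal e.
  apply/seteqP; split.
    move=> f [Cf fa]; exists f => //.
    apply/funext => x; rewrite /e /fmul /fadd /fone /fopp /chi1.
    by case: pselect => h; [rewrite subrr mulr0 h fa | rewrite subr0 mulr1].
  move=> _ [g Cg ->]; split; first exact: CcF_mul.
  rewrite /e /fmul /fadd /fone /fopp /chi1.
  by case: pselect => h //; rewrite subrr mulr0.
split => //; split.
  split.
    split.
    - by move=> f [].
    - by split; [exact: CcF_cst|].
    - by move=> f g [Cf fa] [Cg ga]; split; [exact: CcF_add|rewrite /fadd fa ga addr0].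
    - by move=> f g Cf [Cg ga]; split; [exact: CcF_mul|rewrite /fmul ga mulr0].
  apply/eqP => E.
  have : M_ a (@fone X R) by rewrite E; exact: CcF_cst.
  by move=> [_ /eqP]; rewrite /fone oner_eq0.
move=> J [JC J0 Jadd Jmul] MJ.
case: (pselect (exists g, J g /\ g a <> 0)) => [[g [Jg ga]]|nex].
  right; apply/seteqP; split => // h Ch.
  pose c : X -> R := fun _ => h a / g a.
  have -> : h = fadd (fadd h (fopp (fmul c g))) (fmul c g).
    by apply/funext => x; rewrite /fadd /fopp subrK.
  apply: Jadd; last exact: Jmul (CcF_cst _) Jg.
  apply: MJ; split.
    by apply: CcF_add => //; apply/CcF_opp/CcF_mul => //; [exact: CcF_cst | exact: JC].
  by rewrite /fadd /fopp /fmul /c divfK ?subrr //; apply/eqP.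
left; apply/seteqP; split => // g Jg; split; first exact: JC.
by apply: contrapT => ga; apply: nex; exists g.
Qed.

End S.

Theorem proposition3p18 (X : topologicalType) (R : realType)
  (hT1 : accessible_space X) :
  (forall a : X,
     let e := fadd (@fone X R) (fopp (@chi1 X R a)) in
     [/\ is_maximal_ideal (@M_ X R a), CcF e, fmul e e = e &
         @M_ X R a = principal_ideal e]) /\
  (forall P : set (X -> R),
     is_prime_ideal P -> ~ is_maximal_ideal P -> is_essential_ideal P).
Proof.
split; first exact: partI.
move=> P [[Pid PC] Pprime] Pnmax.
have Pchi : forall a, P (@chi1 X R a).
  move=> a.
  have [Mmax Ce ee Me] := @partI X R hT1 a.
  set e := fadd _ _ in Ce ee Me.
  have [PCcF P0 Padd Pmul] := Pid.
  have z : fmul (@chi1 X R a) e = @fzero X R.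
    apply/funext => x; rewrite /e /fmul /fadd /fone /fopp /chi1 /fzero.
    by case: pselect => h; rewrite ?subrr ?mulr0 ?mul0r.
  have := Pprime _ _ (@CcF_chi X R hT1 a) Ce; rewrite z => /(_ P0) [//|Pe].
  have MP : @M_ X R a `<=` P by rewrite Me => _ [g Cg ->]; exact: Pmul.
  have [_ mx] := Mmax.
  case: (mx P Pid MP) => E.
    by exfalso; apply: Pnmax; rewrite E.
  by rewrite E eqxx in PC.
split => // J [JC J0 Jadd Jmul] Jnz.
have [f [Jf fnz]] : exists f, J f /\ f <> @fzero X R.
  apply: contrapT => nex; move/eqP: Jnz; apply; apply/seteqP; split.
    by move=> f Jf; apply: contrapT => fz; apply: nex; exists f.
  by move=> _ ->.
have [a fa] : exists a, f a <> 0.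
  apply: contrapT => nex; apply: fnz; apply/funext => x.
  by apply: contrapT => fx; apply: nex; exists x.
exists (fmul (@chi1 X R a) f); split.
- have -> : fmul (@chi1 X R a) f = fmul f (@chi1 X R a).
    by apply/funext => x; rewrite /fmul mulrC.
  by case: Pid => _ _ _ Pmul; apply: Pmul (JC _ Jf) (Pchi a).
- exact: Jmul (@CcF_chi X R hT1 a) Jf.
- move=> /(congr1 (fun h => h a)); rewrite /fmul /fzero /chi1.
  by case: pselect => // h; rewrite mul1r.
Qed.
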